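(* Let $M$ be a Riemannian manifold. Let $e_1,e_2$ be paths in $M$ from $p_1$ to $p_2$ of lengths $l_1,l_2$. Suppose the loop $\alpha=e_1*\bar e_2$ based at $p_1$ can be contracted to $p_1$ through loops $\alpha_\tau$ based at $p_1$ of length at most $l_3$. Then $e_1$ is path-homotopic to $e_2$ through curves of length at most $\min\{l_1,l_2\}+l_3$. Moreover (parametric version): let $X$ be a manifold and $\{e_1^x\}_{x\in X}$, $\{e_2^x\}_{x\in X}$ continuous families of paths from $p_1(x)$ to $p_2(x)$ of lengths $l_1(x),l_2(x)$, and suppose there is a continuous family of contractions of the loops $e_1^x*\bar e_2^x$ through loops based at $p_1(x)$ of length at most $l_3(x)$. Then there is a continuous family of path homotopies from $e_1^x$ to $e_2^x$ through curves of length at most $\min_{i=1,2}\max_{x\in X}(l_i(x)+l_3(x))$.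
   Context: $*$ denotes concatenation of paths and $\bar\beta$ denotes the path $\beta$ traversed in the opposite direction. A path homotopy fixes endpoints. *)

(* Defs.v *)
From HB Require Import structures.
From mathcomp Require Import all_boot all_order all_algebra.
From mathcomp Require Import all_classical all_reals all_analysis.
Set Implicit Arguments. Unset Strict Implicit. Unset Printing Implicit Defensive.
Import Order.TTheory GRing.Theory Num.Theory.
Import numFieldNormedType.Exports.
Local Open Scope classical_set_scope.
Local Open Scope ring_scope.

Definition I01 {R : realType} : set R := [set t | 0 <= t <= 1].

(* A path is a function R -> M, only its values on [0,1] matter. *)
Definition curve_length {R : realType} {M : metricType R} (g : R -> M) : \bar R :=
  ereal_sup [set e : \bar R | exists (n : nat) (s : nat -> R),
     [/\ s 0%N = 0, s n = 1, (forall i, (i < n)%N -> s i <= s i.+1) &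
         e = (\sum_(i < n) mdist (g (s i)) (g (s i.+1)))%:E]].

Definition pconcat {R : realType} {M : Type} (f g : R -> M) : R -> M :=
  fun t => if t <= 2^-1 then f (2 * t) else g (2 * t - 1).

Definition path_reverse {R : realType} {M : Type} (g : R -> M) : R -> M :=
  fun t => g (1 - t).

Definition path_from_to {R : realType} {M : metricType R} (g : R -> M) (p q : M) :=
  {within I01, continuous g} /\ g 0 = p /\ g 1 = q.

Definition contraction_bounded {R : realType} {M : metricType R}
    (a : R -> M) (p : M) (l : R) (H : R -> R -> M) :=
  [/\ {within I01 `*` I01, continuous (fun z : R * R => H z.1 z.2)},
      (forall t, I01 t -> H 0 t = a t),
      (forall t, I01 t -> H 1 t = p),
      (forall tau, I01 tau -> H tau 0 = p /\ H tau 1 = p) &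
      (forall tau, I01 tau -> (curve_length (H tau) <= l%:E)%E)].

Definition path_homotopy_bounded {R : realType} {M : metricType R}
    (e f : R -> M) (p q : M) (L : R) (G : R -> R -> M) :=
  [/\ {within I01 `*` I01, continuous (fun z : R * R => G z.1 z.2)},
      (forall t, I01 t -> G 0 t = e t),
      (forall t, I01 t -> G 1 t = f t),
      (forall s, I01 s -> G s 0 = p /\ G s 1 = q) &
      (forall s, I01 s -> (curve_length (G s) <= L%:E)%E)].

(* Main.v *)
Require Import Defs.
From HB Require Import structures.
From mathcomp Require Import all_boot all_order all_algebra.
From mathcomp Require Import all_classical all_reals all_analysis.
From mathcomp Require Import lra.
Import Order.TTheory GRing.Theory Num.Theory.
Import numFieldNormedType.Exports.
Local Open Scope classical_set_scope.
Local Open Scope ring_scope.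
Ltac nomm x := lazymatch x with
  | context [Num.min _ _] => fail
  | context [Num.max _ _] => fail
  | _ => idtac end.
Ltac mmcase := repeat match goal with
 | |- context [Num.min ?x ?y] => nomm x; nomm y; case: (leP x y) => ?
 | |- context [Num.max ?x ?y] => nomm x; nomm y; case: (leP x y) => ?
 end.

Definition cl {R : realType} (x : R) := Num.min 1 (Num.max 0 x).
Definition Rt {R : realType} (u v r : R) : R * R :=
  (Num.min r (Num.min v (Num.max 0 (2*v+1-r))),
   Num.max 0 (Num.min (r - v) (Num.min 1 (2*v+1+u-r)))).
Definition uS {R : realType} (s : R) := cl (3*s).
Definition vS {R : realType} (s : R) := cl (3*s-1).
Definition wS {R : realType} (s : R) := cl (3*s-2).
Definition LS {R : realType} (s : R) := 2 * vS s + 2^-1 + uS s.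
Definition rho {R : realType} (s t : R) := 3 * wS s + t * (LS s - 3 * wS s).
Definition sig {R : realType} (s t : R) : R * R := Rt (uS s) (vS s) (rho s t).

Section sigsec.
Variable R : realType.
Implicit Types s t : R.

Lemma cl_id (x : R) : 0 <= x <= 1 -> cl x = x.
Proof. move=> /andP[? ?]; rewrite /cl; mmcase; lra. Qed.
Lemma cl_0 (x : R) : x <= 0 -> cl x = 0.
Proof. move=> ?; rewrite /cl; mmcase; lra. Qed.
Lemma cl_1 (x : R) : 1 <= x -> cl x = 1.
Proof. move=> ?; rewrite /cl; mmcase; lra. Qed.

Lemma stage s : 0 <= s <= 1 ->
  [\/ [/\ s <= 3^-1, cl (3*s) = 3*s, cl (3*s-1) = 0 & cl (3*s-2) = 0],
      [/\ 3^-1 <= s <= 2/3, cl (3*s) = 1, cl (3*s-1) = 3*s-1 & cl (3*s-2) = 0] |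
      [/\ 2/3 <= s, cl (3*s) = 1, cl (3*s-1) = 1 & cl (3*s-2) = 3*s-2]].
Proof.
move=> /andP[s0 s1].
case: (leP s (3^-1)) => h1.
  apply: Or31; split => //; [apply: cl_id | apply: cl_0 | apply: cl_0];
  rewrite ?andbT; try apply/andP; try split; lra.
case: (leP s (2/3)) => h2.
  apply: Or32; split; [apply/andP; split; lra|apply: cl_1 | apply: cl_id | apply: cl_0];
  try apply/andP; try split; lra.
apply: Or33; split; [lra|apply: cl_1 | apply: cl_1 | apply: cl_id];
  try apply/andP; try split; lra.
Qed.

Lemma Rt_I01 (u v r : R) : 0 <= v -> v <= 1 -> 0 <= r ->
  I01 (Rt u v r).1 /\ I01 (Rt u v r).2.
Proof. by move=> *; rewrite /I01 /Rt /=; split; apply/andP; mmcase; split; lra. Qed.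

Lemma P1 (v r : R) : 0 <= v -> 0 <= r -> r <= v -> Rt 1 v r = (r, 0).
Proof. by move=> *; rewrite /Rt; congr pair; mmcase; lra. Qed.
Lemma P2 (v r : R) : 0 <= v -> v <= r -> r <= v + 1 -> Rt 1 v r = (v, r - v).
Proof. by move=> *; rewrite /Rt; congr pair; mmcase; lra. Qed.
Lemma P3 (v r : R) : 0 <= v -> v + 1 <= r -> r <= 2*v+1 -> Rt 1 v r = (2*v+1-r, 1).
Proof. by move=> *; rewrite /Rt; congr pair; mmcase; lra. Qed.
Lemma P4 (v r : R) : 0 <= v -> 2*v+1 <= r -> r <= 2*v+3/2 -> Rt 1 v r = (0, 2*v+2-r).
Proof. by move=> *; rewrite /Rt; congr pair; mmcase; lra. Qed.
Lemma Q1 (u r : R) : 0 <= u -> u <= 1 -> 0 <= r -> r <= (1+u)/2 -> Rt u 0 r = (0, r).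
Proof. by move=> *; rewrite /Rt; congr pair; mmcase; lra. Qed.
Lemma Q2 (u r : R) : 0 <= u -> u <= 1 -> (1+u)/2 <= r -> r <= 2^-1 + u -> Rt u 0 r = (0, 1+u-r).
Proof. by move=> *; rewrite /Rt; congr pair; mmcase; lra. Qed.

Lemma stage' s : 0 <= s <= 1 ->
  [\/ [/\ s <= 3^-1, uS s = 3*s, vS s = 0 & wS s = 0],
      [/\ 3^-1 <= s <= 2/3, uS s = 1, vS s = 3*s-1 & wS s = 0] |
      [/\ 2/3 <= s, uS s = 1, vS s = 1 & wS s = 3*s-2]].
Proof. exact: stage. Qed.

Lemma cl_01 (x : R) : 0 <= cl x /\ cl x <= 1.
Proof. by rewrite /cl; mmcase; split; lra. Qed.

Lemma LS_w s : I01 s -> 3 * wS s <= LS s.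
Proof.
rewrite /I01 /= => hs; rewrite /LS.
by case: (stage' s hs) => -[h0 -> -> ->]; move: hs => /andP[? ?]; lra.
Qed.

Lemma rho_bounds s t : I01 s -> I01 t -> 3 * wS s <= rho s t /\ rho s t <= LS s.
Proof.
move=> hs; rewrite /I01 /= => /andP[t0 t1]; have := LS_w s hs; rewrite /rho.
move: (LS s) (wS s) => L w h; split; nra.
Qed.

Lemma sig_I01 s t : I01 s -> I01 t -> I01 (sig s t).1 /\ I01 (sig s t).2.
Proof.
move=> hs ht; have [h1 h2] := rho_bounds s t hs ht.
have [w0 w1] := cl_01 (3*s-2); have [v0 v1] := cl_01 (3*s-1).
by apply: Rt_I01 => //; rewrite /wS in h1; lra.
Qed.

Lemma uvw0 : [/\ uS (0:R) = 0, vS (0:R) = 0 & wS (0:R) = 0].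
Proof. by rewrite /uS /vS /wS !cl_0 //; lra. Qed.
Lemma uvw1 : [/\ uS (1:R) = 1, vS (1:R) = 1 & wS (1:R) = 1].
Proof. by rewrite /uS /vS /wS !cl_1 //; lra. Qed.

Lemma sig0 t : I01 t -> sig 0 t = (0, t / 2).
Proof.
rewrite /I01 /= => /andP[t0 t1]; rewrite /sig /rho /LS; case: uvw0 => -> -> ->.
rewrite Q1; [congr pair; lra|lra..].
Qed.

Lemma sig1 t : I01 t -> sig 1 t = (0, 1 - t / 2).
Proof.
rewrite /I01 /= => /andP[t0 t1]; rewrite /sig /rho /LS; case: uvw1 => -> -> ->.
rewrite P4; [congr pair; lra|lra..].
Qed.

Lemma sig_s1 s : I01 s -> sig s 1 = (0, 2^-1).
Proof.
rewrite /I01 /= => hs; rewrite /sig /rho /LS.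
case: (stage' s hs) => -[h0 -> -> ->]; move: hs => /andP[? ?].
- by rewrite Q2; [congr pair; lra|lra..].
- by rewrite P4; [congr pair; lra|lra..].
- by rewrite P4; [congr pair; lra|lra..].
Qed.

Lemma sig_s0 s : I01 s -> exists a b, sig s 0 = (a, b) /\
  (b = 0 \/ a = 1 \/ b = 1).
Proof.
rewrite /I01 /= => hs; rewrite /sig /rho /LS.
case: (stage' s hs) => -[h0 -> -> ->]; move: hs => /andP[? ?].
- by rewrite Q1; [do 2 eexists; split; first reflexivity; left; lra|lra..].
- by rewrite P1; [do 2 eexists; split; first reflexivity; left; lra|lra..].
- case: (leP (3 * (3 * s - 2) + 0 * (2 * 1 + 2^-1 + 1 - 3 * (3 * s - 2))) 1) => h1.
    by rewrite P1; [do 2 eexists; split; first reflexivity; left; lra|lra..].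
  case: (leP (3 * (3 * s - 2) + 0 * (2 * 1 + 2^-1 + 1 - 3 * (3 * s - 2))) 2) => h2.
    by rewrite P2; [do 2 eexists; split; first reflexivity; right; left; lra|lra..].
  by rewrite P3; [do 2 eexists; split; first reflexivity; right; right; lra|lra..].
Qed.

End sigsec.

Section CBsec.
Variables (R : realType) (M : metricType R).

Definition CB (c : R -> M) (a b B : R) :=
  forall n (s : nat -> R), (forall i, (i < n)%N -> s i <= s i.+1) ->
    (forall i, (i <= n)%N -> a <= s i <= b) ->
    \sum_(i < n) mdist (c (s i)) (c (s i.+1)) <= B.

Lemma CB_comp c a b a' b' B (phi : R -> R) :
  (forall x y, a <= x -> x <= y -> y <= b -> phi x <= phi y) ->
  (forall x, a <= x <= b -> a' <= phi x <= b') ->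
  CB c a' b' B -> CB (fun t => c (phi t)) a b B.
Proof.
move=> mono rng cb n s sm sr; apply: (cb n (fun i => phi (s i))).
  move=> i lti; have /andP[h1 _] := sr i (ltnW lti).
  have /andP[_ h2] := sr i.+1 lti.
  by apply: mono => //; exact: sm.
by move=> i lei; apply: rng; exact: sr.
Qed.

Lemma CB_ext c c' a b B : (forall t, a <= t <= b -> c t = c' t) ->
  CB c' a b B -> CB c a b B.
Proof.
move=> e cb n s sm sr.
rewrite (eq_bigr (fun i : 'I_n => mdist (c' (s i)) (c' (s i.+1)))); first exact: cb.
move=> i _; rewrite !e //; apply: sr => //; first exact: ltnW.
Qed.

Lemma CB_const c a b p : (forall t, a <= t <= b -> c t = p) -> CB c a b 0.
Proof.
move=> e n s sm sr; rewrite big1 // => i _.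
by rewrite !e ?mdistxx //; apply: sr => //; exact: ltnW.
Qed.

Lemma CB_le c a b B B' : B <= B' -> CB c a b B -> CB c a b B'.
Proof. by move=> le cb n s sm sr; apply: le_trans (cb n s sm sr) le. Qed.

Lemma CB_glue c a m b B1 B2 : a <= m -> m <= b ->
  CB c a m B1 -> CB c m b B2 -> CB c a b (B1 + B2).
Proof.
move=> am mb c1 c2 n s sm sr.
pose s1 := fun i => Num.min (s i) m.
pose s2 := fun i => Num.max (s i) m.
apply: le_trans (lerD (c1 n s1 _ _) (c2 n s2 _ _)); first last.
- move=> i lei; have /andP[? ?] := sr i lei; rewrite /s2; apply/andP; mmcase; split; lra.
- move=> i lti; have := sm i lti; rewrite /s2; mmcase; lra.
- move=> i lei; have /andP[? ?] := sr i lei; rewrite /s1; apply/andP; mmcase; split; lra.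
- move=> i lti; have := sm i lti; rewrite /s1; mmcase; lra.
rewrite -big_split /=; apply: ler_sum => i _.
rewrite /s1 /s2; have := sm i (ltn_ord i).
case: (leP (s i) m) => h1; case: (leP (s i.+1) m) => h2 h3.
- by rewrite mdistxx addr0.
- exact: metric_triangle.
- lra.
- by rewrite mdistxx add0r.
Qed.

Lemma CB_rev c a b B : CB c a b B -> CB (fun t => c (a + b - t)) a b B.
Proof.
move=> cb n s sm sr.
pose s' := fun i => a + b - s (n - i)%N.
have -> : \sum_(i < n) mdist (c (a + b - s i)) (c (a + b - s i.+1)) =
          \sum_(i < n) mdist (c (s' i)) (c (s' i.+1)).
  rewrite (reindex_inj rev_ord_inj).
  apply: eq_bigr => i _; rewrite metric_sym /s' /=.
  by rewrite subnSK.
apply: cb.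
- move=> i lti; rewrite /s' -(subnSK lti).
  have := sm (n - i.+1)%N; rewrite -subSn // subSS leq_subr => /(_ isT) h.
  lra.
- move=> i lei; rewrite /s'; have /andP[? ?] := sr (n - i)%N (leq_subr _ _).
  apply/andP; split; lra.
Qed.

Lemma chain_mono n (s : nat -> R) : (forall i, (i < n)%N -> s i <= s i.+1) ->
  forall i j, (i <= j)%N -> (j <= n)%N -> s i <= s j.
Proof.
move=> sm i j ij; elim: j ij => [|j IH]; first by rewrite leqn0 => /eqP ->.
rewrite leq_eqVlt => /orP[/eqP -> //|]; rewrite ltnS => ij jn.
apply: le_trans (IH ij (ltnW jn)) (sm j jn).
Qed.

Lemma len_CB c B : CB c 0 1 B -> (curve_length c <= B%:E)%E.
Proof.
move=> cb; rewrite /curve_length; apply: ub_ereal_sup => _ [n [s [s0 sn sm ->]]].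
rewrite lee_fin; apply: cb => // i lei; apply/andP; split.
  by have := chain_mono _ _ sm _ _ (leq0n i) lei; rewrite s0.
by have := chain_mono _ _ sm _ _ lei (leqnn n); rewrite sn.
Qed.

Lemma CB_len c L : (curve_length c <= L%:E)%E -> CB c 0 1 L.
Proof.
move=> cl n s sm sr.
pose s' := fun i : nat => if i == 0%N then 0 else if (i <= n.+1)%N then s i.-1 else 1.
have key : \sum_(i < n.+2) mdist (c (s' i)) (c (s' i.+1)) =
   mdist (c 0) (c (s 0%N)) + \sum_(i < n) mdist (c (s i)) (c (s i.+1))
   + mdist (c (s n)) (c 1).
  rewrite big_ord_recl big_ord_recr /= addrA; congr (_ + _ + _).
  - apply: eq_bigr => i _; rewrite /bump /= add1n /s' /=.
    have h1 : (i <= n)%N by rewrite ltnW.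
    have h2 : (i < n)%N by [].
    by rewrite !ltnS h1 h2.
  - by rewrite /s' /bump /= add1n /= leqnn ltnn.
have : ((\sum_(i < n.+2) mdist (c (s' i)) (c (s' i.+1)))%:E <= L%:E)%E.
  apply: le_trans cl; apply: ereal_sup_ubound; exists n.+2, s'; split => //.
  - by rewrite /s' /= ltnn.
  - move=> i; rewrite ltnS /s'; case: i => [|i] /= lei.
      by have /andP[] := sr 0%N isT.
    rewrite lei ltnS; move: lei; rewrite ltnS leq_eqVlt => /orP[/eqP ->|iltn].
    + by rewrite ltnn; have /andP[] := sr n (leqnn n).
    + by rewrite iltn; apply: sm.
rewrite lee_fin key => h.
have := mdist_ge0 (c 0) (c (s 0%N)); have := mdist_ge0 (c (s n)) (c 1); lra.
Qed.

End CBsec.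

Section ctsl.
Variables (R : realType) (T : topologicalType).
Implicit Types f g : T -> R.
Lemma cD f g x : {for x, continuous f} -> {for x, continuous g} ->
  {for x, continuous (fun z => f z + g z)}.
Proof. by move=> ? ?; apply: cvgD. Qed.
Lemma cB f g x : {for x, continuous f} -> {for x, continuous g} ->
  {for x, continuous (fun z => f z - g z)}.
Proof. by move=> ? ?; apply: cvgB. Qed.
Lemma cN f x : {for x, continuous f} -> {for x, continuous (fun z => - f z)}.
Proof. by move=> ?; apply: cvgN. Qed.
Lemma cM f g x : {for x, continuous f} -> {for x, continuous g} ->
  {for x, continuous (fun z => f z * g z)}.
Proof. by move=> ? ?; apply: cvgM. Qed.
Lemma cmin f g x : {for x, continuous f} -> {for x, continuous g} ->
  {for x, continuous (fun z => Num.min (f z) (g z))}.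
Proof. exact: continuous_min. Qed.
Lemma cmax f g x : {for x, continuous f} -> {for x, continuous g} ->
  {for x, continuous (fun z => Num.max (f z) (g z))}.
Proof. exact: continuous_max. Qed.
Lemma cC (c : R) x : {for x, continuous (fun _ : T => c)}.
Proof. exact: cvg_cst. Qed.
End ctsl.
Lemma cfst (R : realType) (x : R * R) : {for x, continuous (fun z : R * R => z.1)}.
Proof. exact: cvg_fst. Qed.
Lemma csnd (R : realType) (x : R * R) : {for x, continuous (fun z : R * R => z.2)}.
Proof. exact: cvg_snd. Qed.

Ltac cts := repeat match goal with
 | |- prop_for _ _ => unfold prop_for; cbv beta
 | |- continuous_at ?x (fun z => Num.min (@?f z) (@?g z)) => apply: (@cmin _ _ f g x)
 | |- continuous_at ?x (fun z => Num.max (@?f z) (@?g z)) => apply: (@cmax _ _ f g x)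
 | |- continuous_at ?x (fun z => (@?f z) + (@?g z)) => apply: (@cD _ _ f g x)
 | |- continuous_at ?x (fun z => (@?f z) - (@?g z)) => apply: (@cB _ _ f g x)
 | |- continuous_at ?x (fun z => (@?f z) * (@?g z)) => apply: (@cM _ _ f g x)
 | |- continuous_at ?x (fun z => - (@?f z)) => apply: (@cN _ _ f x)
 | |- continuous_at ?x (fun z => z.1) => apply: cfst
 | |- continuous_at ?x (fun z => z.2) => apply: csnd
 | |- continuous_at ?x (fun z => _) => apply: cC
 end.

Lemma cont_pair (T U V : topologicalType) (f : T -> U) (g : T -> V) :
  continuous f -> continuous g -> continuous (fun z => (f z, g z)).
Proof. by move=> cf cg x; apply: cvg_pair; [exact: cf | exact: cg]. Qed.

Lemma sig_cont (R : realType) : continuous (fun z : R * R => sig z.1 z.2).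
Proof.
have -> : (fun z : R * R => sig z.1 z.2) =
  (fun z => ((sig z.1 z.2).1, (sig z.1 z.2).2)) by apply: funext => z; case: (sig _ _).
apply: cont_pair => x; rewrite /sig /Rt /rho /LS /uS /vS /wS /cl /=.
  by cts.
by cts.
Qed.

Lemma wcomp {S T U : topologicalType} (A : set S) (B : set T) (g : S -> T) (f : T -> U) :
  continuous g -> (forall x, A x -> B (g x)) -> {within B, continuous f} ->
  {within A, continuous (fun z => f (g z))}.
Proof.
move=> cg AB /subspace_continuousP cf; apply/subspace_continuousP => x Ax.
rewrite /from_subspace in cf *. apply: cvg_trans; last exact: (cf (g x) (AB x Ax)).
move=> P /= nP; move: nP; rewrite !nbhs_simpl /= /within /= => nP.
have := cg x _ nP; rewrite /= => nP'.
move: nP'; rewrite ?nbhs_simpl /= => nP'. apply: (@filterS _ _ _ (fun y => B (g y) -> P (f (g y)))) => /=; last exact: nP'. move=> y h Ay; exact: h (AB y Ay).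
Qed.

Arguments CB {R M}.

Section core.
Variables (R : realType) (M : metricType R) (K : R -> R -> M) (ea eb : R -> M)
  (p1 p2 : M) (l3 lB : R).
Hypotheses (Ka : forall y, 0 <= y -> y <= 2^-1 -> K 0 y = ea (2*y))
 (Kb : forall y, 2^-1 <= y -> y <= 1 -> K 0 y = eb (2 - 2*y))
 (Kside : forall tau, I01 tau -> K tau 0 = p1 /\ K tau 1 = p1)
 (Ktop : forall t, I01 t -> K 1 t = p1)
 (ea1 : ea 1 = p2)
 (Kl : forall tau, I01 tau -> CB (K tau) 0 1 l3)
 (ebl : CB eb 0 1 lB).

Definition route (u v r : R) := K (Rt u v r).1 (Rt u v r).2.

Lemma I01i {x : R} : 0 <= x -> x <= 1 -> I01 x.
Proof. by move=> *; rewrite /I01 /=; apply/andP. Qed.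

Lemma route2 v : 0 <= v -> v <= 1 -> CB (route 1 v) 0 (2*v+3/2) (l3 + lB).
Proof.
move=> v0 v1.
apply: (@CB_le R M _ _ _ (0 + (l3 + (0 + lB)))); first lra.
apply: (@CB_glue R M _ _ v); try lra.
  apply: (@CB_const R M _ _ _ p1) => r /andP[r0 r1].
  have [h _] := Kside r (I01i r0 (le_trans r1 v1)).
  by rewrite /route P1.
apply: (@CB_glue R M _ _ (v+1)); try lra.
  apply: (@CB_ext R M _ (fun r => K v (r - v))) => [r /andP[r0 r1]|].
    by rewrite /route P2.
  apply: (@CB_comp R M _ _ _ 0 1) => //.
  - by move=> *; lra.
  - by move=> r /andP[? ?]; apply/andP; split; lra.
  - by apply: Kl; apply: I01i.
apply: (@CB_glue R M _ _ (2*v+1)); try lra.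
  apply: (@CB_const R M _ _ _ p1) => r /andP[r0 r1].
  have [_ h] := Kside (2*v+1-r) (I01i (ltac:(lra) : 0 <= 2*v+1-r) (ltac:(lra) : 2*v+1-r <= 1)).
  by rewrite /route P3.
apply: (@CB_ext R M _ (fun r => eb (2 - 2*(2*v+2-r)))) => [r /andP[r0 r1]|].
  by rewrite /route P4 //= Kb //; lra.
apply: (@CB_comp R M _ _ _ 0 1) => //.
- by move=> *; lra.
- by move=> r /andP[? ?]; apply/andP; split; lra.
Qed.

Lemma route1 u : 0 <= u -> u <= 1 -> CB (route u 0) 0 (2^-1 + u) (l3 + lB).
Proof.
move=> u0 u1.
apply: (@CB_glue R M _ _ ((1+u)/2)); try lra.
  apply: (@CB_ext R M _ (fun r => K 0 r)) => [r /andP[r0 r1]|].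
    by rewrite /route Q1.
  apply: (@CB_comp R M _ _ _ 0 1 _ (fun r => r)) => //.
  - by move=> r /andP[? ?]; apply/andP; split; lra.
  - by apply: Kl; apply: I01i; lra.
apply: (@CB_ext R M _ (fun r => eb (2 - 2*(1+u-r)))) => [r /andP[r0 r1]|].
  by rewrite /route Q2 //= Kb //; lra.
apply: (@CB_comp R M _ _ _ 0 1) => //.
- by move=> *; lra.
- by move=> r /andP[? ?]; apply/andP; split; lra.
Qed.

Lemma Gs_CB s : I01 s -> CB (fun t => route (uS s) (vS s) (rho s t)) 0 1 (l3 + lB).
Proof.
move=> hs.
have hw := LS_w _ s hs.
have [w0 w1] := cl_01 _ (3*s-2).
have [u0 u1] := cl_01 _ (3*s).
have [v0 v1] := cl_01 _ (3*s-1).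
apply: (@CB_comp R M _ _ _ 0 (LS s)).
- move=> x y x0 xy y1; rewrite /rho; move: (LS s) (wS s) hw => L w hw'; nra.
- move=> x /andP[x0 x1]; have [h1 h2] := rho_bounds _ s x hs (I01i x0 x1).
  by rewrite /wS in h1; apply/andP; split; lra.
have hs' := hs; rewrite /I01 /= in hs'.
case: (stage' _ s hs') => -[h0 hu hv hw2].
- have -> : LS s = 2^-1 + uS s by rewrite /LS hv; lra.
  rewrite hv; apply: route1; rewrite /uS; lra.
- have -> : LS s = 2 * vS s + 3/2 by rewrite /LS hu; lra.
  rewrite hu; apply: route2; rewrite /vS; lra.
- have -> : LS s = 2 * vS s + 3/2 by rewrite /LS hu; lra.
  rewrite hu; apply: route2; rewrite /vS; lra.
Qed.

Lemma core :
  [/\ forall t, I01 t -> K (sig 0 t).1 (sig 0 t).2 = ea t,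
      forall t, I01 t -> K (sig 1 t).1 (sig 1 t).2 = eb t,
      forall s, I01 s -> K (sig s 0).1 (sig s 0).2 = p1 /\ K (sig s 1).1 (sig s 1).2 = p2 &
      forall s, I01 s -> (curve_length (fun t => K (sig s t).1 (sig s t).2) <= (lB + l3)%:E)%E].
Proof.
split.
- move=> t ht; have ht' := ht; rewrite /I01 /= in ht'.
  rewrite sig0 //= Ka; [congr ea; lra | lra | lra].
- move=> t ht; have ht' := ht; rewrite /I01 /= in ht'.
  rewrite sig1 //= Kb; [congr eb; lra | lra | lra].
- move=> s hs; split.
    have [h1 h2] := sig_I01 _ s 0 hs (I01i (lexx 0) ler01).
    case: (sig_s0 _ s hs) => a [b [e [h|[h|h]]]]; rewrite e /= in h1 h2 *; subst.
    + by case: (Kside a h1).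
    + exact: Ktop.
    + by case: (Kside a h1).
  rewrite sig_s1 //= Ka; [|lra|lra].
  by rewrite mulfV ?ea1.
- move=> s hs; apply: len_CB; apply: (@CB_le R M _ _ _ (l3 + lB)); first lra.
  exact: Gs_CB.
Qed.

End core.


Lemma ccomp {S T U : topologicalType} {f : S -> T} {g : T -> U} :
  continuous f -> continuous g -> continuous (fun z => g (f z)).
Proof. by move=> cf cg x; apply: continuous_comp; [exact: cf | exact: cg]. Qed.
Lemma cfst' (S T : topologicalType) : continuous (@fst S T).
Proof. by move=> x; exact: cvg_fst. Qed.
Lemma csnd' (S T : topologicalType) : continuous (@snd S T).
Proof. by move=> x; exact: cvg_snd. Qed.

Lemma gcont (R : realType) (X : topologicalType) (F : R * R -> R * R) : continuous F ->
  continuous (fun z : X * R * R => ((z.1.1, (F (z.1.2, z.2)).1), (F (z.1.2, z.2)).2)).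
Proof.
move=> cF.
have cp : continuous (fun z : X * R * R => (z.1.2, z.2)).
  apply: cont_pair.
    exact: (ccomp (@cfst' (X * R)%type R) (@csnd' X R)).
  exact: (@csnd' (X * R)%type R).
apply: cont_pair; first apply: cont_pair.
- exact: (ccomp (@cfst' (X * R)%type R) (@cfst' X R)).
- exact: (ccomp (ccomp cp cF) (@cfst' R R)).
- exact: (ccomp (ccomp cp cF) (@csnd' R R)).
Qed.

Lemma sig_cont2 (R : realType) :
  continuous (fun z : R * R => ((sig z.1 z.2).1, (sig z.1 z.2).2)).
Proof. by apply: cont_pair => x; rewrite /sig /Rt /rho /LS /uS /vS /wS /cl /=; cts. Qed.

Lemma sigr_cont (R : realType) :
  continuous (fun z : R * R => ((sig (1 - z.1) z.2).1, 1 - (sig (1 - z.1) z.2).2)).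
Proof. by apply: cont_pair => x; rewrite /sig /Rt /rho /LS /uS /vS /wS /cl /=; cts. Qed.

Lemma I01i' (R : realType) (x : R) : 0 <= x -> x <= 1 -> I01 x.
Proof. by move=> *; rewrite /I01 /=; apply/andP. Qed.

Lemma single_full (R : realType) (M : metricType R) (p1 p2 : M) (e1 e2 : R -> M)
  (l1 l2 l3 : R) (H : R -> R -> M) :
  path_from_to e1 p1 p2 -> path_from_to e2 p1 p2 ->
  curve_length e1 = l1%:E -> curve_length e2 = l2%:E ->
  contraction_bounded (pconcat e1 (path_reverse e2)) p1 l3 H ->
  path_homotopy_bounded e1 e2 p1 p2 (l2 + l3) (fun s t => H (sig s t).1 (sig s t).2) /\
  path_homotopy_bounded e1 e2 p1 p2 (l1 + l3)
    (fun s t => H (sig (1 - s) t).1 (1 - (sig (1 - s) t).2)).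
Proof.
move=> [_ [e10 e11]] [_ [e20 e21]] le1 le2 [cH H0 H1 Hs Hl].
have ebl1 : CB e1 0 1 l1 by apply: CB_len; rewrite le1.
have ebl2 : CB e2 0 1 l2 by apply: CB_len; rewrite le2.
split.
- have [c1 c2 c3 c4] := @core R M H e1 e2 p1 p2 l3 l2
    ltac:(move=> y y0 y1; rewrite H0; [by rewrite /pconcat ifT | apply: I01i'; lra])
    ltac:(move=> y y0 y1; rewrite H0 /pconcat /path_reverse; [|apply: I01i'; lra];
          case: (leP y 2^-1) => h;
          [rewrite (_ : 2 - 2 * y = 1); [|lra]; rewrite (_ : 2 * y = 1); [|lra];
           by rewrite e11 e21
          | congr e2; lra])
    Hs H1 e11 ltac:(move=> tau htau; apply: CB_len; exact: Hl) ebl2.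
  split => //.
  apply: (@wcomp _ _ _ _ (I01 `*` I01) (fun z => ((sig z.1 z.2).1, (sig z.1 z.2).2))
            (fun z => H z.1 z.2)) => //.
    exact: sig_cont2.
  move=> z [hz1 hz2]; have [h1 h2] := sig_I01 _ z.1 z.2 hz1 hz2; by split.
- have Kb2 : forall y, 2^-1 <= y -> y <= 1 -> (fun tau t => H tau (1 - t)) 0 y = e1 (2 - 2 * y).
    move=> y y0 y1 /=; rewrite H0 /pconcat /path_reverse; last by apply: I01i'; lra.
    case: (leP (1 - y) 2^-1) => h; first by congr e1; lra.
    have : 1 - y <= 2^-1 by lra.
    by rewrite leNgt h.
  have [c1 c2 c3 c4] := @core R M (fun tau t => H tau (1 - t)) e2 e1 p1 p2 l3 l1
    ltac:(move=> y y0 y1 /=; rewrite H0 /pconcat /path_reverse; [|apply: I01i'; lra];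
          case: (leP (1 - y) 2^-1) => h;
          [rewrite (_ : 2 * (1 - y) = 1); [|lra]; rewrite (_ : 2 * y = 1); [|lra];
           by rewrite e11 e21
          | congr e2; lra])
    Kb2
    ltac:(move=> tau htau /=; rewrite subr0 subrr; have [? ?] := Hs tau htau; by split)
    ltac:(move=> t ht /=; apply: H1; move: ht; rewrite /I01 /= => /andP[? ?]; apply: I01i'; lra)
    e21
    ltac:(move=> tau htau; apply: (@CB_ext R M _ (fun t => H tau (0 + 1 - t)));
          [by move=> t _; rewrite add0r | apply: CB_rev; apply: CB_len; exact: Hl])
    ebl1.
  split.
  + have maps : forall z : R * R, (I01 `*` I01) z ->
        (I01 `*` I01) ((sig (1 - z.1) z.2).1, 1 - (sig (1 - z.1) z.2).2).
      move=> z [hz1 hz2].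
      have hz1' : I01 (1 - z.1).
        by move: hz1; rewrite /I01 /= => /andP[? ?]; apply: I01i'; lra.
      have [h1 h2] := sig_I01 _ (1 - z.1) z.2 hz1' hz2; split => //.
      by move: h2; rewrite /I01 /= => /andP[? ?]; apply: I01i'; lra.
    have W := @wcomp _ _ _ (I01 `*` I01) (I01 `*` I01)
       (fun z => ((sig (1 - z.1) z.2).1, 1 - (sig (1 - z.1) z.2).2))
       (fun z => H z.1 z.2) (sigr_cont R) maps cH.
    exact: W.
  + by move=> t ht; rewrite /= subr0; exact: c2.
  + by move=> t ht; rewrite /= subrr; exact: c1.
  + move=> s hs; apply: c3.
    by move: hs; rewrite /I01 /= => /andP[? ?]; apply: I01i'; lra.
  + move=> s hs; apply: (c4 (1 - s)).
    by move: hs; rewrite /I01 /= => /andP[? ?]; apply: I01i'; lra.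
Qed.

Lemma mapsr (R : realType) : forall z : R * R, (I01 `*` I01) z ->
  (I01 `*` I01) ((sig (1 - z.1) z.2).1, 1 - (sig (1 - z.1) z.2).2).
Proof.
move=> z [hz1 hz2].
have hz1' : I01 (1 - z.1).
  by move: hz1; rewrite /I01 /= => /andP[? ?]; apply: I01i'; lra.
have [h1 h2] := sig_I01 _ (1 - z.1) z.2 hz1' hz2; split => //.
by move: h2; rewrite /I01 /= => /andP[? ?]; apply: I01i'; lra.
Qed.

Lemma maps2 (R : realType) : forall z : R * R, (I01 `*` I01) z ->
  (I01 `*` I01) ((sig z.1 z.2).1, (sig z.1 z.2).2).
Proof. by move=> z [hz1 hz2]; have [h1 h2] := sig_I01 _ z.1 z.2 hz1 hz2. Qed.

Lemma maps_gen (R : realType) (X : topologicalType) (F : R * R -> R * R) :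
  (forall w, (I01 `*` I01) w -> (I01 `*` I01) (F w)) ->
  forall z : X * R * R, ([set: X] `*` I01 `*` I01) z ->
  ([set: X] `*` I01 `*` I01) ((z.1.1, (F (z.1.2, z.2)).1), (F (z.1.2, z.2)).2).
Proof.
move=> hF z [[_ hz1] hz2]; have [h1 h2] := hF (z.1.2, z.2) (conj hz1 hz2).
by split.
Qed.

Lemma phb_mono (R : realType) (M : metricType R) (e f : R -> M) (p q : M) (L L' : R)
  (G : R -> R -> M) : L <= L' -> path_homotopy_bounded e f p q L G ->
  path_homotopy_bounded e f p q L' G.
Proof.
move=> LL [a b c d h]; split => // s hs; apply: le_trans (h s hs) _.
by rewrite lee_fin.
Qed.

Theorem lemma4p3 (R : realType) (M : metricType R) :
  (* non-parametric version *)
  (forall (p1 p2 : M) (e1 e2 : R -> M) (l1 l2 l3 : R) (H : R -> R -> M),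
     path_from_to e1 p1 p2 -> path_from_to e2 p1 p2 ->
     curve_length e1 = l1%:E -> curve_length e2 = l2%:E ->
     contraction_bounded (pconcat e1 (path_reverse e2)) p1 l3 H ->
     exists G : R -> R -> M,
       path_homotopy_bounded e1 e2 p1 p2 (Num.min l1 l2 + l3) G)
  /\
  (* parametric version *)
  (forall (X : topologicalType) (p1 p2 : X -> M) (e1 e2 : X -> R -> M)
          (l1 l2 l3 : X -> R) (H : X -> R -> R -> M) (L1 L2 : R),
     {within [set: X] `*` I01, continuous (fun z : X * R => e1 z.1 z.2)} ->
     {within [set: X] `*` I01, continuous (fun z : X * R => e2 z.1 z.2)} ->
     (forall x, path_from_to (e1 x) (p1 x) (p2 x)) ->
     (forall x, path_from_to (e2 x) (p1 x) (p2 x)) ->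
     (forall x, curve_length (e1 x) = (l1 x)%:E) ->
     (forall x, curve_length (e2 x) = (l2 x)%:E) ->
     {within [set: X] `*` I01 `*` I01,
        continuous (fun z : X * R * R => H z.1.1 z.1.2 z.2)} ->
     (forall x, contraction_bounded (pconcat (e1 x) (path_reverse (e2 x))) (p1 x) (l3 x) (H x)) ->
     (forall x, l1 x + l3 x <= L1) ->
     (forall x, l2 x + l3 x <= L2) ->
     exists G : X -> R -> R -> M,
       {within [set: X] `*` I01 `*` I01,
          continuous (fun z : X * R * R => G z.1.1 z.1.2 z.2)} /\
       forall x, path_homotopy_bounded (e1 x) (e2 x) (p1 x) (p2 x) (Num.min L1 L2) (G x)).
Proof.
split.
- move=> p1 p2 e1 e2 l1 l2 l3 H pe1 pe2 le1 le2 hc.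
  have [A B] := @single_full R M p1 p2 e1 e2 l1 l2 l3 H pe1 pe2 le1 le2 hc.
  by case: (leP l1 l2) => _; eexists; [exact: B | exact: A].
move=> X p1 p2 e1 e2 l1 l2 l3 H L1 L2 _ _ pe1 pe2 le1 le2 cH hc hL1 hL2.
case: (leP L1 L2) => hL.
- exists (fun x s t => H x (sig (1 - s) t).1 (1 - (sig (1 - s) t).2)); split.
    have W := @wcomp _ _ _ ([set: X] `*` I01 `*` I01) ([set: X] `*` I01 `*` I01) _
      (fun z => H z.1.1 z.1.2 z.2) (gcont R X _ (sigr_cont R)) (@maps_gen R X _ (@mapsr R)) cH.
    exact: W.
  move=> x.
  have [_ B] := @single_full R M (p1 x) (p2 x) (e1 x) (e2 x) (l1 x) (l2 x) (l3 x) (H x)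
    (pe1 x) (pe2 x) (le1 x) (le2 x) (hc x).
  exact: (@phb_mono R M _ _ _ _ _ _ _ (hL1 x) B).
- exists (fun x s t => H x (sig s t).1 (sig s t).2); split.
    have W := @wcomp _ _ _ ([set: X] `*` I01 `*` I01) ([set: X] `*` I01 `*` I01) _
      (fun z => H z.1.1 z.1.2 z.2) (gcont R X _ (sig_cont2 R)) (@maps_gen R X _ (@maps2 R)) cH.
    exact: W.
  move=> x.
  have [A _] := @single_full R M (p1 x) (p2 x) (e1 x) (e2 x) (l1 x) (l2 x) (l3 x) (H x)
    (pe1 x) (pe2 x) (le1 x) (le2 x) (hc x).
  exact: (@phb_mono R M _ _ _ _ _ _ _ (hL2 x) A).
Qed.
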